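(* Let $\Omega$ be a topological Hausdorff space, $\mathcal{FV}(\Omega)$ a dom-space and $T\colon\mathcal{FV}(\Omega)\to\mathcal{C}(\Omega)$ linear. Then the map $\delta\circ T\colon\Omega\to\mathcal{FV}(\Omega)'_\gamma$, $x\mapsto\delta_x\circ T$, is well-defined and continuous in each of the following cases: (i) $\Omega$ is a $k_{\mathbb{R}}$-space and $T\colon\mathcal{FV}(\Omega)\to\mathcal{CW}(\Omega)$ is continuous; (ii) $T$ maps into $\mathcal{C}_b(\Omega)$ and $T\colon\mathcal{FV}(\Omega)\to\mathcal{C}_b(\Omega)$ is continuous.
   Context: $\mathbb{K}\in\{\mathbb{R},\mathbb{C}\}$. $\mathcal{CW}(\Omega)$: continuous $\mathbb{K}$-valued functions with the topology of uniform convergence on compact subsets; $\mathcal{C}_b(\Omega)$: bounded continuous $\mathbb{K}$-valued functions with the topology of uniform convergence on $\Omega$. A completely regular space $\Omega$ is a $k_{\mathbb{R}}$-space if every map from $\Omega$ into a completely regular space whose restriction to each compact subset is continuous is continuous. $\mathcal{FV}(\Omega)'_\gamma$: dual with the topology of uniform convergence on precompact subsets. $(\delta_x\circ T)(f):=T(f)(x)$. Framework: $J,M$ non-empty index sets, $(\omega_m)_{m\in M}$ non-empty sets, $\nu_{j,m}\colon\omega_m\to[0,\infty)$ such that for all $m$, $x\in\omega_m$ some $\nu_{j,m}(x)>0$; $\operatorname{AP}(\Omega)\subset\mathbb{K}^\Omega$ a linear subspace; $T_m\colon\operatorname{dom}T_m\to\mathbb{K}^{\omega_m}$ linear maps on linear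 subspaces of $\mathbb{K}^\Omega$; $\mathcal{FV}(\Omega):=\{f\in\operatorname{AP}(\Omega)\cap\bigcap_m\operatorname{dom}T_m: |f|_{j,m}:=\sup_{x\in\omega_m}|T_m(f)(x)|\nu_{j,m}(x)<\infty\ \forall j,m\}$ with these seminorms. It is a dom-space if it is Hausdorff, the seminorms are directed and every $\delta_x\colon f\mapsto f(x)$ belongs to $\mathcal{FV}(\Omega)'$. *)

(* Defs.v *)
From Stdlib Require List.
From HB Require Import structures.
From mathcomp Require Import all_boot all_algebra all_classical all_reals all_analysis.
From mathcomp Require Import complex.
Set Implicit Arguments. Unset Strict Implicit. Unset Printing Implicit Defensive.
Import GRing.Theory Num.Theory numFieldTopology.Exports numFieldNormedType.Exports.
Local Open Scope ring_scope.
Local Open Scope classical_set_scope.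

(** The scalar field: [KK R true] is the real field R, [KK R false] is the
    complex field R[i] (i.e. 𝕂 ∈ {ℝ, ℂ}). *)
Definition KK (R : realType) (b : bool) : numFieldType :=
  if b then (R : numFieldType) else (R[i] : numFieldType).

(** The maps T_m
    are represented as total functions, only their values on dom T_m matter. *)
Unset Implicit Arguments.
Record FVdata (K : numFieldType) (Omega : Type) := FVData {
  fv_J : Type;
  fv_M : Type;
  fv_om : fv_M -> Type;
  fv_nu : fv_J -> forall m : fv_M, fv_om m -> K;
  fv_AP : set (Omega -> K);
  fv_dom : fv_M -> set (Omega -> K);
  fv_T : forall m : fv_M, (Omega -> K) -> fv_om m -> K }.
Arguments fv_J {K Omega} _ : assert.
Arguments fv_M {K Omega} _ : assert.
Arguments fv_om {K Omega} _ m : assert.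
Arguments fv_nu {K Omega} _ j m x : assert.
Arguments fv_AP {K Omega} _ _ : assert.
Arguments fv_dom {K Omega} _ m _ : assert.
Arguments fv_T {K Omega} _ m f x : assert.
Set Implicit Arguments.

Section FV.
Variables (K : numFieldType) (Omega : Type) (D : FVdata K Omega).

Definition lin_subspace (S : set (Omega -> K)) :=
  S (fun _ => 0) /\
  forall (a : K) f g, S f -> S g -> S (fun y => a * f y + g y).

Definition framework :=
  inhabited (fv_J D) /\ inhabited (fv_M D) /\
  (forall m, inhabited (fv_om D m)) /\
  (forall j m x, 0 <= fv_nu D j m x) /\
  (forall m x, exists j, 0 < fv_nu D j m x) /\
  lin_subspace (fv_AP D) /\
  (forall m, lin_subspace (fv_dom D m)) /\
  (forall m (a : K) f g, fv_dom D m f -> fv_dom D m g ->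
     fv_T D m (fun y => a * f y + g y) = (fun x => a * fv_T D m f x + fv_T D m g x)).

(** [snle j m f c] : |f|_{j,m} = sup_{x ∈ ω_m} |T_m(f)(x)| ν_{j,m}(x) <= c. *)
Definition snle (j : fv_J D) (m : fv_M D) (f : Omega -> K) (c : K) :=
  forall x : fv_om D m, `|fv_T D m f x| * fv_nu D j m x <= c.

Definition FV : set (Omega -> K) :=
  [set f | fv_AP D f /\ (forall m, fv_dom D m f) /\
           (forall j m, exists c : K, snle j m f c)].

Definition fsub (f g : Omega -> K) : Omega -> K := fun y => f y - g y.

(** [lc_nbhs f0 P] : P holds on a neighbourhood of f0 in FV(Ω) for the
    locally convex topology induced by the seminorms |.|_{j,m}; the basic
    neighbourhoods are finite intersections of seminorm balls. *)
Definition lc_nbhs (f0 : Omega -> K) (P : (Omega -> K) -> Prop) :=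
  exists (s : seq (fv_J D * fv_M D)) (d : K), 0 < d /\
    forall f, FV f -> (forall p, Stdlib.Lists.List.In p s -> snle p.1 p.2 (fsub f f0) d) -> P f.

Definition lc_continuous (phi : (Omega -> K) -> K) :=
  forall f0, FV f0 -> forall e : K, 0 < e ->
    lc_nbhs f0 (fun f => `|phi f - phi f0| <= e).

Definition is_linear_on (phi : (Omega -> K) -> K) :=
  forall (a : K) f g, FV f -> FV g -> phi (fun y => a * f y + g y) = a * phi f + phi g.

Definition dom_space :=
  (forall f, FV f -> (forall j m, snle j m f 0) -> f = (fun _ => 0)) /\
  (forall j1 m1 j2 m2, exists j3 m3 (C : K), 0 < C /\
     forall f, FV f -> forall c, snle j3 m3 f c ->
       snle j1 m1 f (C * c) /\ snle j2 m2 f (C * c)) /\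
  (forall x : Omega, is_linear_on (fun f => f x) /\ lc_continuous (fun f => f x)).

Definition fv_precompact (B : set (Omega -> K)) :=
  B `<=` FV /\
  forall (s : seq (fv_J D * fv_M D)) (d : K), 0 < d ->
    exists F : seq (Omega -> K), (forall g, Stdlib.Lists.List.In g F -> FV g) /\
      forall b, B b -> exists g, Stdlib.Lists.List.In g F /\
        forall p, Stdlib.Lists.List.In p s -> snle p.1 p.2 (fsub b g) d.

End FV.

Definition kR_space (R : realType) (Omega : topologicalType) :=
  completely_regular_space Omega /\
  forall (Y : topologicalType), completely_regular_space Y ->
    forall f : Omega -> Y,
      (forall C : set Omega, compact C -> {within C, continuous f}) ->
      continuous f.

(* Main.v *)
Require Import Defs.
From HB Require Import structures.
From mathcomp Require Import all_boot all_algebra all_classical all_reals all_analysis.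
From mathcomp Require Import complex.
From mathcomp Require Import ring.
Import mathcomp.order.order.Order.TTheory GRing.Theory Num.Theory numFieldTopology.Exports numFieldNormedType.Exports.
Local Open Scope ring_scope.
Local Open Scope classical_set_scope.

Section Aux.
Variables (R : realType) (b : bool) (Omega : topologicalType).
Local Notation K := (KK R b).
Variable (D : FVdata K Omega).
Hypothesis HF : framework D.

Lemma FV0 : FV D (fun _ => 0).
Proof.
have [_ [_ [_ [Hnu [_ [[AP0 _] [Hdom HT]]]]]]] := HF.
split; first exact: AP0.
split; first by move=> m; case: (Hdom m).
move=> j m; exists 0 => x.
have E : fv_T D m (fun _ => 0) x = 0.
  have := HT m 1 (fun _ => 0) (fun _ => 0) (proj1 (Hdom m)) (proj1 (Hdom m)).
  rewrite [X in fv_T D m X](_ : _ = fun _ => 0); last first.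
    by apply: funext => y /=; rewrite mul1r addr0.
  move/(congr1 (fun h => h x)); rewrite /= mul1r => /eqP.
  by rewrite eq_sym -subr_eq0 addrK => /eqP.
by rewrite E normr0 mul0r.
Qed.

Lemma FV_lin (a : K) f g : FV D f -> FV D g -> FV D (fun y => a * f y + g y).
Proof.
have [_ [_ [_ [Hnu [_ [[_ APl] [Hdom HT]]]]]]] := HF.
move=> [Af [Df Sf]] [Ag [Dg Sg]].
split; first exact: APl.
split; first by move=> m; apply: (proj2 (Hdom m)).
move=> j m; have [c1 Hc1] := Sf j m; have [c2 Hc2] := Sg j m.
exists (`|a| * c1 + c2) => x.
rewrite HT //.
apply: le_trans (ler_wpM2r (Hnu _ _ _) (ler_normD _ _)) _.
rewrite normrM mulrDl -mulrA; apply: lerD; last exact: Hc2.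
by apply: ler_wpM2l; [exact: normr_ge0 | exact: Hc1].
Qed.

Lemma fsubE (f g : Omega -> K) : fsub f g = (fun y => -1 * g y + f y).
Proof. by apply: funext => y; rewrite /fsub mulN1r addrC. Qed.

Lemma FV_sub f g : FV D f -> FV D g -> FV D (fsub f g).
Proof. by move=> Hf Hg; rewrite fsubE; apply: FV_lin. Qed.

Lemma fsub0 (f : Omega -> K) : fsub f (fun _ => 0) = f.
Proof. by apply: funext => y; rewrite /fsub subr0. Qed.

Lemma lc_mono f0 (P Q : (Omega -> K) -> Prop) :
  lc_nbhs D f0 P -> (forall f, FV D f -> P f -> Q f) -> lc_nbhs D f0 Q.
Proof.
move=> [s [d [d0 H]]] PQ; exists s, d; split => // f Hf Hs.
by apply: PQ => //; apply: H.
Qed.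

Lemma near_list (x0 : Omega) (F : seq (Omega -> K))
  (P : (Omega -> K) -> Omega -> Prop) :
  (forall g, List.In g F -> \forall x \near x0, P g x) ->
  \forall x \near x0, forall g, List.In g F -> P g x.
Proof.
elim: F => [|g F IH] H.
  by apply: filterE => x g [].
have H1 := H g (or_introl erefl).
have H2 := IH (fun g' Hg' => H g' (or_intror Hg')).
apply: filterS2 H1 H2 => x Hx1 Hx2 g' [<-|Hg'] //; exact: Hx2.
Qed.

Variable T : (Omega -> K) -> (Omega -> K).
Hypothesis HTlin : forall (a : K) f g, FV D f -> FV D g ->
     T (fun y => a * f y + g y) = (fun x => a * T f x + T g x).
Hypothesis HTc : forall f, FV D f -> continuous (T f).

Lemma T0 : T (fun _ => 0) = fun _ => 0.
Proof.
have := @HTlin 1 _ _ FV0 FV0.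
rewrite [X in T X](_ : _ = fun _ => 0); last first.
  by apply: funext => y /=; rewrite mul1r addr0.
move=> E; apply: funext => x.
move/(congr1 (fun h => h x)): E; rewrite /= mul1r => /eqP.
by rewrite eq_sym -subr_eq0 addrK => /eqP.
Qed.

Lemma Tsub f g : FV D f -> FV D g -> T (fsub f g) = fun x => T f x - T g x.
Proof.
move=> Hf Hg; rewrite fsubE HTlin //; apply: funext => x.
by rewrite mulN1r addrC.
Qed.

Lemma key (A : set Omega) :
 (forall e : K, 0 < e -> exists (s : seq (fv_J D * fv_M D)) (d : KK R b), 0 < d /\ forall f, FV D f ->
    (forall p, List.In p s -> snle p.1 p.2 f d) -> forall x, A x -> `|T f x| <= e) ->
 forall B, fv_precompact D B -> forall e : K, 0 < e -> forall x0, A x0 ->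
 \forall x \near x0, A x -> forall f, B f -> `|T f x - T f x0| <= e.
Proof.
move=> HA B [BFV HB] e e0 x0 Ax0.
have e30 : 0 < e / 3 by rewrite divr_gt0 // ltr0n.
have [s [d [d0 Hsd]]] := HA _ e30.
have [F [FFV HFB]] := HB s d d0.
have Hn : \forall x \near x0, forall g, List.In g F -> `|T g x0 - T g x| <= e/3.
  apply: near_list => g Hg; have Hc := @HTc g (FFV g Hg) x0; exact: (cvgr_dist_le _ _ Hc _ e30).
apply: filterS Hn => x Hx Ax f Bf.
have [g [Hg Hbg]] := HFB f Bf.
have Hfg : FV D (fsub f g) := FV_sub f g (BFV f Bf) (FFV g Hg).
have h1 := Hsd _ Hfg Hbg x Ax.
have h2 := Hsd _ Hfg Hbg x0 Ax0.
have HbF := BFV f Bf; have HgF := FFV g Hg.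
rewrite !Tsub // in h1 h2.
have -> : T f x - T f x0 = (T f x - T g x) - (T f x0 - T g x0) + (T g x - T g x0)
  by ring.
apply: le_trans (ler_normD _ _) _.
apply: le_trans (lerD (ler_normB _ _) (lexx _)) _.
have -> : e = e / 3 + e / 3 + e / 3.
  by field.
apply: lerD; first exact: lerD.
by rewrite distrC; apply: Hx.
Qed.

End Aux.
Arguments lc_mono {R b Omega D f0 P Q}.

Theorem lemma4p2 (R : realType) (b : bool) (Omega : topologicalType)
  (D : FVdata (KK R b) Omega)
  (T : (Omega -> KK R b) -> (Omega -> KK R b)) :
  hausdorff_space Omega ->
  framework D -> dom_space D ->
  (* T : FV(Ω) -> C(Ω) linear *)
  (forall (a : KK R b) f g, FV D f -> FV D g ->
     T (fun y => a * f y + g y) = (fun x => a * T f x + T g x)) ->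
  (forall f, FV D f -> continuous (T f)) ->
  ( (* (i) *)
    (kR_space R Omega /\
     forall f0, FV D f0 -> forall C : set Omega, compact C ->
       forall e : KK R b, 0 < e ->
         lc_nbhs D f0 (fun f => forall x, C x -> `|T f x - T f0 x| <= e))
  \/ (* (ii) *)
    ((forall f, FV D f -> exists c : KK R b, forall x, `|T f x| <= c) /\
     forall f0, FV D f0 -> forall e : KK R b, 0 < e ->
       lc_nbhs D f0 (fun f => forall x, `|T f x - T f0 x| <= e)) ) ->
  (* δ_x ∘ T ∈ FV(Ω)' for every x *)
  (forall x : Omega,
     is_linear_on D (fun f => T f x) /\ lc_continuous D (fun f => T f x)) /\
  (* x ↦ δ_x ∘ T is continuous into FV(Ω)'_γ *)
  (forall B, fv_precompact D B -> forall e : KK R b, 0 < e ->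
     forall x0 : Omega, \forall x \near x0, forall f, B f -> `|T f x - T f x0| <= e).
Proof.
move=> _ HF _ HTlin HTc Hcase.
have HA : forall A : set Omega,
  (forall e : KK R b, 0 < e -> lc_nbhs D (fun _ => 0)
     (fun f => forall x, A x -> `|T f x - T (fun _ => 0) x| <= e)) ->
  (forall e : KK R b, 0 < e -> exists (s : seq (fv_J D * fv_M D)) (d : KK R b), 0 < d /\ forall f, FV D f ->
    (forall p, List.In p s -> snle p.1 p.2 f d) -> forall x, A x -> `|T f x| <= e).
  move=> A H e e0; have [s [d [d0 Hsd]]] := H e e0.
  exists s, d; split => // f Hf Hs x Ax.
  have := Hsd f Hf _ x Ax; rewrite (@T0 _ _ _ _ HF _ HTlin) subr0; apply.
  by move=> p Hp; rewrite fsub0; apply: Hs.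
split.
  move=> x; split.
    by move=> a f g Hf Hg; rewrite HTlin.
  move=> f0 Hf0 e e0; case: Hcase => [[_ Hi]|[_ Hii]].
    have c1 : compact [set x] by exact: compact_set1.
    apply: lc_mono (Hi f0 Hf0 [set x] c1 e e0) _.
    by move=> f _ H; exact: H x erefl.
  by apply: lc_mono (Hii f0 Hf0 e e0) _ => f _ H; exact: H x.
move=> B HB e e0 x0; case: Hcase => [[[_ HkR] Hi]|[_ Hii]]; last first.
  have HAT : forall e : KK R b, 0 < e -> exists (s : seq (fv_J D * fv_M D)) (d : KK R b), 0 < d /\ forall f, FV D f ->
    (forall p, List.In p s -> snle p.1 p.2 f d) -> forall x, setT x -> `|T f x| <= e.
    by apply: HA => e' e'0; apply: lc_mono (Hii _ (@FV0 _ _ _ _ HF) e' e'0) _ => f _ H x _; apply: H.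
  have := @key _ _ _ _ HF _ HTlin HTc setT HAT B HB e e0 x0 I.
  by apply: filterS => x H f Bf; exact: H I f Bf.
pose Psi := fun x : Omega => ((fun f => T f x) : {uniform` B -> KK R b}).
have cPsi : continuous Psi.
  apply: HkR; first exact: uniform_completely_regular.
  move=> C cC; apply/subspace_continuousP => x Cx.
  move=> P /uniform_nbhs [E [entE EP]].
  rewrite -entourage_ballE in entE; case: entE => eps eps0 epsE.
  have eps20 : 0 < eps / 2 by rewrite divr_gt0 // ltr0n.
  have HAC : forall e : KK R b, 0 < e -> exists (s : seq (fv_J D * fv_M D)) (d : KK R b), 0 < d /\ forall f, FV D f ->
    (forall p, List.In p s -> snle p.1 p.2 f d) -> forall x, C x -> `|T f x| <= e.
    by apply: HA => e' e'0; apply: (Hi _ (@FV0 _ _ _ _ HF) C cC e' e'0).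
  have := @key _ _ _ _ HF _ HTlin HTc C HAC B HB _ eps20 x Cx.
  rewrite /fmap /within /=.
  apply: filterS => y Hy Cy; apply: EP => f Bf; apply: epsE => /=.
  rewrite -ball_normE /= distrC; apply: le_lt_trans (Hy Cy f Bf) _.
  by rewrite ltr_pdivrMr ?ltr0n // ltr_pMr ?ltr1n.
have HP : nbhs (Psi x0) [set h : {uniform` B -> KK R b} | forall f, B f -> `|h f - T f x0| <= e].
  apply/uniform_nbhs; exists [set xy | ball xy.1 e xy.2]; split.
    by rewrite -entourage_ballE; exists e.
  move=> h Hh f Bf; have := Hh f Bf; rewrite -ball_normE /= distrC => /ltW //.
exact: (cPsi x0 _ HP).
Qed.
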